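(* Let $F = \{f_1,\dots,f_N\}$ with $f_i(z) = a_i z + b_i$, $a_i,b_i\in\mathbb{Z}$ and $a_i > 0$ for all $i$. Let $z \in \mathbb{N}$, let $\alpha, \beta$ be reduced regular expressions, and let $\ell$ be a finite (possibly empty) sequence of literals. Then: (1) $I'(z, \ell \alpha^* \beta) \iff V(z, \ell) \land \big(I'(z, \ell \beta) \lor I'(P_\ell(z), \alpha)\big)$; (2) $I'(z, \ell \alpha^* ) \iff V(z, \ell) \land \big(I'(z, \ell) \lor I'(P_\ell(z), \alpha)\big)$; (3) $I'(z, \alpha^* \beta) \iff I'(z, \alpha) \lor I'(z, \beta)$; (4) $I'(z, \alpha^* ) \iff I'(z,\alpha)$.
   Context: Regular expressions are over the alphabet $\{1,\dots,N\}$ (literals), built with concatenation, union, Kleene star, $\epsilon$ and $\emptyset$; $L(E)$ is the language of $E$. For a word $s = e_1 \cdots e_K$ put $P_s = f_{e_K} \circ \dots \circ f_{e_1}$ (with $P_\epsilon$ the identity), viewed as the composition $(f_{e_1},\dots,f_{e_K})$; its orbit at $z$ is $\{z, f_{e_1}(z), (f_{e_2}\circ f_{e_1})(z),\dots,P_s(z)\}$. A regular expression is reduced if it contains no $\emptyset$ symbol and no union operation. $V(z,s)$ is the statement that every element of the orbit of $P_s$ at $z$ is nonnegative (i.e. $P_s$ is valid with respect to $z$). For $z\in\mathbb{N}$ and reduced $E$, $I'(z,E)$ is the statement: there exists $s \in L(E)$ with $V(z,s)$ and $P_s(z) > z$. *)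

(* Defs.v *)
From Stdlib Require Import ZArith List.
Import ListNotations.
Open Scope Z_scope.

(* Regular expressions over literals (natural numbers; the alphabet {1..N}
   is enforced by the predicate [lits_in]). *)
Inductive regex : Type :=
| Eps : regex
| Empty : regex
| Lit : nat -> regex
| Cat : regex -> regex -> regex
| Union : regex -> regex -> regex
| Star : regex -> regex.

Inductive in_lang : regex -> list nat -> Prop :=
| in_eps : in_lang Eps []
| in_lit : forall x, in_lang (Lit x) [x]
| in_cat : forall E1 E2 s1 s2, in_lang E1 s1 -> in_lang E2 s2 -> in_lang (Cat E1 E2) (s1 ++ s2)
| in_union_l : forall E1 E2 s, in_lang E1 s -> in_lang (Union E1 E2) s
| in_union_r : forall E1 E2 s, in_lang E2 s -> in_lang (Union E1 E2) s
| in_star_nil : forall E, in_lang (Star E) []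
| in_star_cons : forall E s1 s2, in_lang E s1 -> in_lang (Star E) s2 -> in_lang (Star E) (s1 ++ s2).

Fixpoint reduced (E : regex) : Prop :=
  match E with
  | Eps => True
  | Empty => False
  | Lit _ => True
  | Cat E1 E2 => reduced E1 /\ reduced E2
  | Union _ _ => False
  | Star E1 => reduced E1
  end.

Fixpoint lits_in (N : nat) (E : regex) : Prop :=
  match E with
  | Eps | Empty => True
  | Lit x => (1 <= x <= N)%nat
  | Cat E1 E2 | Union E1 E2 => lits_in N E1 /\ lits_in N E2
  | Star E1 => lits_in N E1
  end.

Definition word_re (l : list nat) : regex :=
  fold_right (fun x r => Cat (Lit x) r) Eps l.

Definition fapp (a b : nat -> Z) (i : nat) (z : Z) : Z := a i * z + b i.

Fixpoint P (a b : nat -> Z) (s : list nat) (z : Z) : Z :=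
  match s with
  | [] => z
  | e :: s' => P a b s' (fapp a b e z)
  end.

Fixpoint orbit (a b : nat -> Z) (z : Z) (s : list nat) : list Z :=
  match s with
  | [] => [z]
  | e :: s' => z :: orbit a b (fapp a b e z) s'
  end.

Definition V (a b : nat -> Z) (z : Z) (s : list nat) : Prop :=
  forall x, In x (orbit a b z s) -> 0 <= x.

Definition I' (a b : nat -> Z) (z : Z) (E : regex) : Prop :=
  exists s, in_lang E s /\ V a b z s /\ P a b s z > z.

(* Main.v *)
Require Import Defs.
From Stdlib Require Import ZArith List Lia.
Import ListNotations.
Open Scope Z_scope.

Definition goodw (a : nat -> Z) (s : list nat) := Forall (fun e => 0 < a e) s.

Lemma V_nil a b x : V a b x [] <-> 0 <= x.
Proof. unfold V; simpl; split; intros H. - apply H; auto. - intros y [<-|[]]; auto. Qed.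

Lemma V_cons a b x e s : V a b x (e :: s) <-> 0 <= x /\ V a b (fapp a b e x) s.
Proof.
  unfold V; simpl; split.
  - intros H; split; [apply H; auto | intros y Hy; apply H; auto].
  - intros [H1 H2] y [<-|Hy]; auto.
Qed.

Lemma V_head a b x s : V a b x s -> 0 <= x.
Proof. destruct s; [apply V_nil | intros H; apply V_cons in H; tauto]. Qed.

Lemma P_app a b u v x : P a b (u ++ v) x = P a b v (P a b u x).
Proof. revert x; induction u; simpl; auto. Qed.

Lemma V_app a b u v x : V a b x (u ++ v) <-> V a b x u /\ V a b (P a b u x) v.
Proof.
  revert x; induction u as [|e u IH]; intros x; simpl.
  - rewrite V_nil; split; [intros H; split; [eapply V_head; eauto | auto] | tauto].
  - rewrite !V_cons, IH; tauto.
Qed.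

Lemma P_in_orbit a b s x : In (P a b s x) (orbit a b x s).
Proof. revert x; induction s; simpl; auto. Qed.

Lemma V_last a b s x : V a b x s -> 0 <= P a b s x.
Proof. intros H; apply H, P_in_orbit. Qed.

Lemma lift a b s : goodw a s -> forall x y, x <= y -> V a b x s ->
  V a b y s /\ P a b s y - y >= P a b s x - x.
Proof.
  induction s as [|e s IH]; intros Hg x y Hxy HV; simpl.
  - rewrite V_nil in *; lia.
  - inversion Hg as [|? ? Ha Hg']; subst.
    rewrite V_cons in *; destruct HV as [H0 HV].
    assert (fapp a b e x <= fapp a b e y) by (unfold fapp; nia).
    destruct (IH Hg' _ _ H HV) as [H1 H2].
    split; [split; [lia|auto]|].
    unfold fapp in *; nia.
Qed.

Lemma lang_letters N E s : in_lang E s -> lits_in N E -> Forall (fun x => (1 <= x <= N)%nat) s.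
Proof.
  induction 1; simpl; intros; try tauto; auto; try (apply Forall_app; tauto).
Qed.

Lemma word_re_lang l s : in_lang (word_re l) s <-> s = l.
Proof.
  split.
  - revert s; induction l; simpl; intros s H.
    + inversion H; auto.
    + inversion H as [| | ? ? s1 s2 Hl Hr | | | |]; subst.
      inversion Hl; subst. simpl. f_equal; auto.
  - intros ->; induction l; simpl; [constructor|].
    change (a :: l) with ([a] ++ l); constructor; auto; constructor.
Qed.

Lemma cat_word l X s : in_lang (Cat (word_re l) X) s <-> exists s', s = l ++ s' /\ in_lang X s'.
Proof.
  split.
  - intros H; inversion H as [| | ? ? s1 s2 Hl Hr | | | |]; subst.
    apply word_re_lang in Hl; subst; eauto.
  - intros [s' [-> H]]; constructor; auto; apply word_re_lang; auto.
Qed.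

Lemma nonempty E : reduced E -> exists s, in_lang E s.
Proof.
  induction E; simpl; intros H; try tauto.
  - eexists; constructor.
  - eexists; constructor.
  - destruct H as [H1 H2]; destruct (IHE1 H1) as [s1 ?]; destruct (IHE2 H2) as [s2 ?].
    eexists; constructor; eauto.
  - eexists; apply in_star_nil.
Qed.

Lemma star_dec a b alpha (galpha : forall w, in_lang alpha w -> goodw a w) u :
  in_lang (Star alpha) u -> forall x z, x <= z -> V a b x u -> P a b u x > z -> I' a b z alpha.
Proof.
  intros H; remember (Star alpha) as E; revert HeqE.
  induction H; intros HE; try discriminate; injection HE; intros ->; intros x z Hxz HV HP.
  - simpl in HP; lia.
  - rewrite P_app in HP; apply V_app in HV; destruct HV as [HV1 HV2].
    destruct (Z_lt_le_dec z (P a b s1 x)).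
    + destruct (lift a b s1 (galpha _ H) x z Hxz HV1) as [Hz1 Hz2].
      exists s1; split; auto; split; auto; lia.
    + eapply IHin_lang2; eauto.
Qed.

Lemma pump_star a b alpha (galpha : forall w, in_lang alpha w -> goodw a w) w y :
  in_lang alpha w -> V a b y w -> P a b w y > y -> forall n : nat,
  exists u, in_lang (Star alpha) u /\ goodw a u /\ V a b y u /\ P a b u y >= y + Z.of_nat n.
Proof.
  intros Hw HV HP; induction n as [|n IH].
  - exists []; split; [constructor|]; split; [constructor|]; split;
      [apply V_nil; eapply V_head; eauto | simpl; lia].
  - destruct IH as [u [Hu [Hg [HVu HPu]]]].
    destruct (lift a b u Hg y (P a b w y) ltac:(lia) HVu) as [H1 H2].
    exists (w ++ u). split; [constructor; auto|].
    split; [unfold goodw; apply Forall_app; split; [apply galpha|]; auto|].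
    split; [apply V_app; auto|]. rewrite P_app; lia.
Qed.

Lemma tail_bound a b t : goodw a t -> exists c, 0 <= c /\
  forall y, c <= y -> forall x, In x (orbit a b y t) -> y - c <= x.
Proof.
  induction t as [|e t IH]; intros Hg.
  - exists 0; split; [lia|]; simpl; intros y _ x [<-|[]]; lia.
  - inversion Hg as [|? ? Ha Hg']; subst. destruct (IH Hg') as [c [Hc H]].
    exists (c + Z.abs (b e)); split; [lia|]. simpl; intros y Hy x [<-|Hx]; [lia|].
    assert (fapp a b e y >= y + b e) by (unfold fapp; nia).
    assert (c <= fapp a b e y) by lia.
    specialize (H _ H1 x Hx); lia.
Qed.

Lemma pump_beta a b alpha beta (galpha : forall w, in_lang alpha w -> goodw a w)
  (gbeta : forall w, in_lang beta w -> goodw a w) (rb : reduced beta) w y K :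
  in_lang alpha w -> V a b y w -> P a b w y > y ->
  exists s, in_lang (Cat (Star alpha) beta) s /\ V a b y s /\ P a b s y > K.
Proof.
  intros Hw HV HP.
  destruct (nonempty _ rb) as [t Ht].
  destruct (tail_bound a b t (gbeta _ Ht)) as [c [Hc Hb]].
  assert (Hy : 0 <= y) by (eapply V_head; eauto).
  destruct (pump_star a b alpha galpha w y Hw HV HP (Z.to_nat (c + Z.abs K + 1)))
    as [u [Hu [_ [HVu HPu]]]].
  rewrite Z2Nat.id in HPu by lia.
  exists (u ++ t); split; [constructor; auto|].
  split.
  - apply V_app; split; auto. intros x Hx. specialize (Hb (P a b u y) ltac:(lia) x Hx); lia.
  - rewrite P_app. specialize (Hb (P a b u y) ltac:(lia) _ (P_in_orbit a b t _)); lia.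
Qed.

Theorem mainTheorem13 (N : nat) (a b : nat -> Z)
  (ha : forall i, (1 <= i <= N)%nat -> 0 < a i)
  (z : Z) (hz : 0 <= z) (alpha beta : regex) (l : list nat)
  (ralpha : reduced alpha) (rbeta : reduced beta)
  (lalpha : lits_in N alpha) (lbeta : lits_in N beta)
  (hl : Forall (fun x => (1 <= x <= N)%nat) l) :
  (I' a b z (Cat (word_re l) (Cat (Star alpha) beta)) <->
     V a b z l /\ (I' a b z (Cat (word_re l) beta) \/ I' a b (P a b l z) alpha)) /\
  (I' a b z (Cat (word_re l) (Star alpha)) <->
     V a b z l /\ (I' a b z (word_re l) \/ I' a b (P a b l z) alpha)) /\
  (I' a b z (Cat (Star alpha) beta) <-> I' a b z alpha \/ I' a b z beta) /\
  (I' a b z (Star alpha) <-> I' a b z alpha).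
Proof.
  assert (hgood : forall E s, lits_in N E -> in_lang E s -> goodw a s).
  { intros E s HE Hs. eapply Forall_impl; [|eapply lang_letters; eauto]. simpl; auto. }
  pose proof (fun w H => hgood alpha w lalpha H) as ga.
  pose proof (fun w H => hgood beta w lbeta H) as gb.
  set (y := P a b l z).
  split; [|split; [|split]].
  - split.
    + intros [s [Hs [HV HP]]]. apply cat_word in Hs. destruct Hs as [s' [-> Hs']].
      inversion Hs' as [| | ? ? u t Hu Ht | | | |]; subst.
      apply V_app in HV; destruct HV as [HVl HV]. apply V_app in HV; destruct HV as [HVu HVt].
      rewrite !P_app in HP. fold y in HVu, HVt, HP.
      split; auto.
      destruct (Z_lt_le_dec y (P a b u y)).
      * right. eapply star_dec; eauto; lia.
      * left. destruct (lift a b t (gb _ Ht) _ _ l0 HVt) as [H1 H2].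
        exists (l ++ t); split; [apply cat_word; eauto|].
        split; [apply V_app; auto | rewrite P_app; fold y; lia].
    + intros [HVl [[s [Hs [HV HP]]] | [w [Hw [HVw HPw]]]]].
      * apply cat_word in Hs; destruct Hs as [t [-> Ht]].
        exists (l ++ t); split; auto.
        apply cat_word; exists t; split; [reflexivity|].
        exact (in_cat _ _ [] t (in_star_nil _) Ht).
      * destruct (pump_beta a b alpha beta ga gb rbeta w y z Hw HVw HPw) as [s0 [Hs0 [HV0 HP0]]].
        exists (l ++ s0); split; [apply cat_word; eauto|].
        split; [apply V_app; auto | rewrite P_app; auto].
  - split.
    + intros [s [Hs [HV HP]]]. apply cat_word in Hs. destruct Hs as [u [-> Hu]].
      apply V_app in HV; destruct HV as [HVl HVu]. rewrite P_app in HP. fold y in HVu, HP.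
      split; auto.
      destruct (Z_lt_le_dec y (P a b u y)).
      * right. eapply star_dec; eauto; lia.
      * left. exists l; split; [apply word_re_lang; auto|]. split; auto. fold y; lia.
    + intros [HVl [[s [Hs [HV HP]]] | [w [Hw [HVw HPw]]]]].
      * apply word_re_lang in Hs; subst.
        exists (l ++ []); split; [apply cat_word; exists []; split; [auto|constructor]|].
        rewrite app_nil_r; auto.
      * assert (Hy : 0 <= y) by (eapply V_head; eauto).
        destruct (pump_star a b alpha ga w y Hw HVw HPw (Z.to_nat (Z.abs z + 1)))
          as [u [Hu [_ [HVu HPu]]]].
        rewrite Z2Nat.id in HPu by lia.
        exists (l ++ u); split; [apply cat_word; eauto|].
        split; [apply V_app; auto | rewrite P_app; fold y; lia].
  - split.
    + intros [s [Hs [HV HP]]]. inversion Hs as [| | ? ? u t Hu Ht | | | |]; subst.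
      rewrite P_app in HP. apply V_app in HV; destruct HV as [HVu HVt].
      destruct (Z_lt_le_dec z (P a b u z)).
      * left. eapply (star_dec a b alpha ga u Hu z z); auto; lia.
      * right. destruct (lift a b t (gb _ Ht) _ _ l0 HVt) as [H1 H2].
        exists t; split; auto; split; auto; lia.
    + intros [[w [Hw [HVw HPw]]] | [t [Ht [HV HP]]]].
      * exact (pump_beta a b alpha beta ga gb rbeta w z z Hw HVw HPw).
      * exists t; split; auto. exact (in_cat _ _ [] t (in_star_nil _) Ht).
  - split.
    + intros [u [Hu [HV HP]]]. eapply (star_dec a b alpha ga u Hu z z); auto; lia.
    + intros [w [Hw [HV HP]]]. exists (w ++ []); split; [constructor; auto; constructor|].
      rewrite app_nil_r; auto.
Qed.
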